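(* Assume the Erdős girth conjecture: for every integer $k\ge1$ there are infinitely many $\eta$ for which there exists a graph on $\eta$ vertices with girth $2k+2$ and $\Omega(\eta^{1+1/k})$ edges. Then for every integer $k\ge1$ there are infinitely many $n$ for which there exist an undirected graph $G'$ on $n$ vertices with nonnegative edge weights and a vertex $s$ such that every $f$-EFT $\sigma$-ASPT of $G'$ rooted at $s$ with $f\ge\log n$ and $\sigma<\frac{3k+1}{k+1}$ has $\Omega(n^{1+1/k})$ edges.
   Context: For a weighted graph $G'=(V,E,w)$ with source $s$, an $f$-EFT $\sigma$-ASPT of $G'$ rooted at $s$ is a spanning subgraph $H$ of $G'$ such that for every $F\subseteq E$ with $|F|\le f$ and every vertex $t$, $d_{H-F}(t)\le\sigma\,d_{G'-F}(t)$, where $X-F$ is $X$ with the edges of $F$ removed and $d_X(t)$ is the shortest-path distance from $s$ to $t$ in $X$. Logarithms are base $2$. *)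

(* Defs.v *)
From HB Require Import structures.
From mathcomp Require Import all_boot all_order all_algebra.
From mathcomp Require Import all_classical all_reals ereal exp.
Set Implicit Arguments. Unset Strict Implicit. Unset Printing Implicit Defensive.
Import Order.TTheory GRing.Theory Num.Theory.
Local Open Scope ring_scope.

Definition log2 {R : realType} (x : R) : R := ln x / ln 2.

Definition simple_graph (n : nat) (E : {set {set 'I_n}}) : Prop :=
  forall e, e \in E -> #|e| = 2%N.

Definition has_cycle_of_length (n : nat) (E : {set {set 'I_n}}) (m : nat) : Prop :=
  exists p : seq 'I_n,
    [/\ size p = m, (3 <= m)%N, uniq p & cycle (fun u v => [set u; v] \in E) p].

Definition girth_eq (n : nat) (E : {set {set 'I_n}}) (g : nat) : Prop :=
  has_cycle_of_length E g /\ (forall m, (m < g)%N -> ~ has_cycle_of_length E m).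

(* Walks from s to t using edges of X (given as the list of vertices after s). *)
Definition is_walk (n : nat) (X : {set {set 'I_n}}) (s t : 'I_n) (p : seq 'I_n) : bool :=
  path (fun u v => [set u; v] \in X) s p && (last s p == t).

Definition walk_len {R : realType} (n : nat) (w : {set 'I_n} -> R) (s : 'I_n)
  (p : seq 'I_n) : R :=
  \sum_(e <- pairmap (fun u v => [set u; v]) s p) w e.

(* Shortest-path distance from s to t in the graph with edge set X and
   weights w; +oo if t is unreachable. *)
Definition dist {R : realType} (n : nat) (X : {set {set 'I_n}}) (w : {set 'I_n} -> R)
  (s t : 'I_n) : \bar R :=
  ereal_inf [set (walk_len w s p)%:E | p in [set p | is_walk X s t p]]%classic.

Definition is_EFT_ASPT {R : realType} (n : nat) (E : {set {set 'I_n}})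
  (w : {set 'I_n} -> R) (s : 'I_n) (f : nat) (sigma : R) (H : {set {set 'I_n}}) : Prop :=
  H \subset E /\
  forall F : {set {set 'I_n}}, F \subset E -> (#|F| <= f)%N ->
    forall t : 'I_n, (dist (H :\: F) w s t <= sigma%:E * dist (E :\: F) w s t)%E.

Definition erdos_girth_conjecture (R : realType) (k : nat) : Prop :=
  exists c : R, 0 < c /\
    forall N : nat, exists eta : nat, (N <= eta)%N /\
      exists E : {set {set 'I_eta}},
        [/\ simple_graph E, girth_eq E (2 * k + 2)%N &
            c * powR (eta%:R) (1 + k%:R^-1) <= #|E|%:R].

(* Main.v *)
Require Import Defs.
From HB Require Import structures.
From mathcomp Require Import all_boot all_order all_algebra.
From mathcomp Require Import all_classical all_reals ereal exp.
Import Order.TTheory GRing.Theory Num.Theory.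
From mathcomp Require Import zify.
Set Implicit Arguments. Unset Strict Implicit. Unset Printing Implicit Defensive.

Section Psi.
Variables (eta : nat) (E0 : {set {set 'I_eta}}) (a0 b0 : 'I_eta) (K : nat).

Definition e0 : rel 'I_eta := fun u v => ([set u; v] \in E0) && ([set u; v] != [set a0; b0]).
Definition Rw m x := exists p, (size p <= m)%N /\ path e0 a0 p /\ last a0 p = x.
Lemma psi_ex x : exists m, `[< Rw m x >] || (m == K).
Proof. by exists K; rewrite eqxx orbT. Qed.
Definition psi x := ex_minn (psi_ex x).

Lemma psi_le x : (psi x <= K)%N.
Proof. rewrite /psi; case: ex_minnP => m _ H; apply: H; by rewrite eqxx orbT. Qed.

Lemma psi_a0 : psi a0 = 0%N.
Proof.
rewrite /psi; case: ex_minnP => m _ H; apply/eqP; rewrite -leqn0; apply: H.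
apply/orP; left; apply/asboolP; by exists [::].
Qed.

Lemma psi_ge1 x : (0 < K)%N -> x != a0 -> (1 <= psi x)%N.
Proof.
move=> K0 xa; rewrite /psi; case: ex_minnP => m Hm _; rewrite lt0n; apply/eqP => m0.
move: Hm; rewrite m0 => /orP[/asboolP [p [sp [_ lp]]]|/eqP K0'].
  by case: p sp lp => // _ /= xe; rewrite -xe eqxx in xa.
by rewrite -K0' in K0.
Qed.

Lemma e0_sym u v : e0 u v = e0 v u.
Proof. by rewrite /e0 finset.setUC. Qed.

Lemma psi_lip x y : e0 x y -> (psi y <= psi x + 1)%N.
Proof.
move=> exy; rewrite {2}/psi; case: ex_minnP => m Hm _.
case/orP: Hm => [/asboolP [p [sp [pp lp]]]|/eqP ->].
  rewrite /psi; case: ex_minnP => m' _ H; apply: H; apply/orP; left; apply/asboolP.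
  exists (rcons p y); split; first by rewrite size_rcons addn1.
  by rewrite rcons_path pp lp exy last_rcons.
apply: leq_trans (psi_le y) _; exact: leq_addr.
Qed.

Lemma girth_walk (g : nat) p : girth_eq E0 g -> a0 != b0 -> [set a0; b0] \in E0 ->
  path e0 a0 p -> last a0 p = b0 -> (g <= (size p).+1)%N.
Proof.
move=> [_ Hg] ab abE pp.
case: (shortenP pp) => p' pp' up' sub' lp'.
have sz : (size p' <= size p)%N by apply: uniq_leq_size sub'; case/andP: up'.
apply: leq_trans (_ : (size p').+1 <= _)%N; last by [].
rewrite leqNgt; apply/negP => lt; apply: (Hg _ lt).
exists (a0 :: p'); split => //.
- case: p' pp' lp' {up' sub' sz lt} => [|x [|y q]] /=.
  + by move=> _ e; rewrite e eqxx in ab.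
  + move=> /andP[]; rewrite /e0 => /andP[_ ] /negP + _ e; by rewrite e.
  + by [].
- rewrite /cycle rcons_path lp'; apply/andP; split.
    by apply: sub_path pp' => u v /andP[].
  by rewrite finset.setUC.
Qed.

Lemma psi_b0 : girth_eq E0 K.+1 -> a0 != b0 -> [set a0; b0] \in E0 -> psi b0 = K.
Proof.
move=> Hg ab abE; apply/eqP; rewrite eqn_leq psi_le /=; rewrite leqNgt; apply/negP => lt.
move: lt; rewrite /psi; case: ex_minnP => m Hm _ lt.
case/orP: Hm => [/asboolP [p [sp [pp lp]]]|/eqP e]; last by rewrite e ltnn in lt.
have := girth_walk Hg ab abE pp lp; rewrite ltnS => H.
by move: (leq_ltn_trans (leq_trans H sp) lt); rewrite ltnn.
Qed.
End Psi.

Definition sib (y : nat) := if odd y then y.-1 else y.+1.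

Lemma sibP x y : x./2 = y./2 -> x != y -> x = sib y.
Proof.
move=> h ne; have ex := odd_double_half x; have ey := odd_double_half y.
rewrite h in ex; rewrite /sib; move: ne ex ey; case: (odd x); case: (odd y) => /=;
  rewrite -!mul2n => /eqP; lia.
Qed.

Lemma sib_half y : (sib y)./2 = y./2.
Proof.
have ey := odd_double_half y; set h := y./2 in ey *; rewrite /sib; move: ey.
case: (odd y) => /= ey; rewrite -ey.
  by rewrite add1n /= doubleK.
by rewrite add0n; exact: uphalf_double.
Qed.

Section Tree.
Local Open Scope nat_scope.
Variables (d a : nat).
Hypotheses (Hd : (0 < d)%N) (Ha1 : (expn 2 d <= a)%N) (Ha2 : (a < expn 2 d.+1)%N).

Lemma adiv_lo j : (j <= d)%N -> (2 ^ (d-j) <= a %/ 2 ^ j)%N.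
Proof. by move=> jd; rewrite leq_divRL ?expn_gt0 // -expnD subnK. Qed.

Lemma adiv_hi j : (j <= d)%N -> (a %/ 2 ^ j < 2 ^ (d-j).+1)%N.
Proof. by move=> jd; rewrite ltn_divLR ?expn_gt0 // -expnD addSn subnK. Qed.

Lemma adivS j : (a %/ 2 ^ j.+1 = (a %/ 2 ^ j)./2)%N.
Proof. by rewrite expnSr divnMA divn2. Qed.

Lemma adiv_d : (a %/ 2 ^ d = 1)%N.
Proof.
apply/eqP; rewrite eqn_leq; have := adiv_hi (leqnn d); have := adiv_lo (leqnn d).
by rewrite subnn expn0 expn1; lia.
Qed.

Definition Cn (x : nat) := (0 < x)%N && [exists j : 'I_d.+1, x == a %/ 2 ^ j].

Lemma Cpath j : (j <= d)%N -> Cn (a %/ 2 ^ j).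
Proof.
move=> jd; apply/andP; split.
  by apply: leq_trans (adiv_lo jd); rewrite expn_gt0.
by apply/existsP; exists (Ordinal (jd : (j < d.+1)%N)).
Qed.

Lemma Ca : Cn a.
Proof. by have := Cpath (leq0n d); rewrite expn0 divn1. Qed.

Lemma C1 : Cn 1.
Proof. by have := Cpath (leqnn d); rewrite adiv_d. Qed.

Lemma Cleaf x : (2 ^ d <= x)%N -> Cn x -> x = a.
Proof.
move=> lx /andP[_ /existsP[[j jd] /= /eqP xe]].
case: j jd xe => [|j] jd xe; first by rewrite xe expn0 divn1.
rewrite ltnS in jd.
have h2 := adiv_hi jd; rewrite -xe in h2.
have h1 : (2 ^ (d - j.+1).+1 <= 2 ^ d)%N by rewrite leq_exp2l //; lia.
by move: (leq_ltn_trans lx (leq_trans h2 h1)); rewrite ltnn.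
Qed.

Lemma Cclos z : Cn z -> (1 < z)%N -> Cn z./2.
Proof.
move=> /andP[_ /existsP[[j jd] /= /eqP xe]] z1.
have jd' : (j < d)%N.
  rewrite ltnS leq_eqVlt in jd; case/orP: jd => // /eqP jd.
  by rewrite xe jd adiv_d in z1.
by rewrite xe -adivS; apply: Cpath.
Qed.

Lemma Fstruct z : (z < 2 ^ d.+1)%N -> (1 < z)%N -> ~~ Cn z -> Cn z./2 ->
  exists j : 'I_d, z = sib (a %/ 2 ^ j) /\ z./2 = a %/ 2 ^ j.+1.
Proof.
move=> zlt z1 nC /andP[_ /existsP[[i id] /= /eqP xe]].
case: i id xe => [|j] id xe.
  have : (z./2 < 2 ^ d)%N by rewrite ltn_half_double -mul2n -expnS.
  by rewrite xe expn0 divn1 ltnNge Ha1.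
have jd : (j < d)%N by rewrite -ltnS.
exists (Ordinal jd) => /=; split => //.
apply: sibP; first by rewrite xe adivS.
apply/negP => /eqP e; move: nC; rewrite e Cpath //; exact: ltnW.
Qed.
End Tree.

From mathcomp Require Import finset.

Lemma set2_eq (T : finType) (u v x y : T) :
  [set u; v] = [set x; y] -> (u = x /\ v = y) \/ (u = y /\ v = x).
Proof.
move=> H.
have: u \in [set x; y] by rewrite -H set21.
have: v \in [set x; y] by rewrite -H set22.
have: x \in [set u; v] by rewrite H set21.
have: y \in [set u; v] by rewrite H set22.
move=> /set2P[] e1 /set2P[] e2 /set2P[] e3 /set2P[] e4; subst; auto.
Qed.

Lemma half_ltn x : (0 < x)%N -> (x./2 < x)%N.
Proof. move=> x0; have := odd_double_half x; rewrite -mul2n; case: (odd x) => /=; lia. Qed.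

Section Graph.
Local Open Scope nat_scope.
Variables (k d m eta : nat) (E0 : {set {set 'I_eta}}).
Hypotheses (Hd : 0 < d) (Hm : m.+1 = 2 ^ d.+1) (Heta : eta <= 2 ^ d) (HE0 : simple_graph E0).

Notation V := 'I_m.+1.
Definition emb (v : 'I_eta) : V := inord (2 ^ d + v).
Definition Etree := [set e : {set V} | [exists x : V, (1 < x) && (e == [set x; inord x./2])]].
Definition EG := (fun e : {set 'I_eta} => emb @: e) @: E0.
Definition Eall := Etree :|: EG.
Definition Lset := [set x : V | 2 ^ d <= x].
Definition wn (e : {set V}) := if e \subset Lset then 1 else if e :&: Lset != set0 then k else 0.
Definition wl (x : V) p := \sum_(e <- pairmap (fun u v => [set u; v]) x p) wn e.

Lemma emb_val v : (emb v : nat) = 2 ^ d + v.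
Proof. rewrite /emb inordK // Hm expnS mul2n -addnn ltn_add2l; exact: leq_trans (ltn_ord v) Heta. Qed.

Lemma emb_inj : injective emb.
Proof. by move=> u v /(congr1 (@nat_of_ord _)); rewrite !emb_val => /addnI /val_inj. Qed.

Lemma val_half (x : V) : ((inord x./2 : V) : nat) = x./2.
Proof. rewrite inordK //; apply: leq_ltn_trans (ltn_ord x); have := odd_double_half x; rewrite -mul2n; lia. Qed.

Lemma wn2 (u v : V) : wn [set u; v] =
  if (2 ^ d <= u) && (2 ^ d <= v) then 1 else if (2 ^ d <= u) || (2 ^ d <= v) then k else 0.
Proof.
rewrite /wn subUset !sub1set !inE.
case hu: (2 ^ d <= u); case hv: (2 ^ d <= v) => //=.
- by rewrite ifT //; apply/set0Pn; exists u; rewrite !inE eqxx hu.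
- by rewrite ifT //; apply/set0Pn; exists v; rewrite !inE eqxx hv orbT.
- rewrite ifF //; apply/negbTE; rewrite negbK; apply/eqP/setP => x; rewrite !inE.
  by apply/negP => /andP[/orP[]/eqP->]; rewrite ?hu ?hv.
Qed.

Lemma Eall_simple : simple_graph Eall.
Proof.
move=> e; rewrite inE => /orP[|].
  rewrite inE => /existsP[x /andP[x1 /eqP ->]]; rewrite cards2.
  case: eqP => // /(congr1 (@nat_of_ord _)); rewrite val_half => h.
  by have := half_ltn (ltnW x1); lia.
move=> /imsetP[e0 e0E ->]; rewrite card_imset; last exact: emb_inj.
exact: HE0.
Qed.

Lemma potential (phi0 : V -> nat) (X : {set {set V}}) :
  (forall u v : V, [set u; v] \in X -> phi0 v <= phi0 u + wn [set u; v]) ->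
  forall x p, path (fun u v => [set u; v] \in X) x p -> phi0 (last x p) <= phi0 x + wl x p.
Proof.
move=> Hl x p; elim: p x => [|y p IH] x /=; first by rewrite /wl /= big_nil addn0.
case/andP => hxy hp; rewrite /wl /= big_cons -/(wl y p).
apply: leq_trans (IH y hp) _; have := Hl _ _ hxy; lia.
Qed.

Lemma walk_lenE (R : realType) x p :
  walk_len (fun e => (wn e)%:R : R)%R x p = ((wl x p)%:R)%R.
Proof. by rewrite /walk_len /wl natr_sum. Qed.
Section Fault.
Variables (a0 b0 : 'I_eta).
Hypotheses (Hab : a0 != b0) (HabE : [set a0; b0] \in E0) (Hg : girth_eq E0 (2 * k + 2)).

Definition av := (emb a0 : nat).
Definition C x := Cn d av x.
Definition Fset := [set e : {set V} |
  [exists z : V, [&& 1 < z, ~~ C z, C z./2 & e == [set z; inord z./2]]]].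
Definition psi' t := if insub t is Some v then psi E0 a0 b0 (2 * k + 1) v else 2 * k + 1.
Definition phi (x : V) := if 2 ^ d <= x then k + psi' (x - 2 ^ d) else if C x then 0 else 2 * k + 1.

Lemma av1 : 2 ^ d <= av.
Proof. by rewrite /av emb_val leq_addr. Qed.
Lemma av2 : av < 2 ^ d.+1.
Proof. rewrite /av emb_val expnS mul2n -addnn ltn_add2l; exact: leq_trans (ltn_ord a0) Heta. Qed.

Lemma psi'_le (t : nat) : psi' t <= 2 * k + 1.
Proof. rewrite /psi'; case: insubP => // v _ _; exact: psi_le. Qed.
Lemma psi'_ge1 (t : nat) : t != a0 -> 1 <= psi' t.
Proof.
rewrite /psi'; case: insubP => [v _ vt|_] ta; last by rewrite addn1.
apply: psi_ge1; first by rewrite addn1.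
by apply/eqP => e; move: ta; rewrite -vt e eqxx.
Qed.
Lemma psi'_val (v : 'I_eta) : psi' v = psi E0 a0 b0 (2 * k + 1) v.
Proof. by rewrite /psi' valK. Qed.

Lemma phi_emb v : phi (emb v) = k + psi E0 a0 b0 (2 * k + 1) v.
Proof. by rewrite /phi emb_val leq_addr addKn psi'_val. Qed.

Lemma zlt (z : V) : z < 2 ^ d.+1.
Proof. by rewrite -Hm. Qed.

Lemma half_small (z : V) : z./2 < 2 ^ d.
Proof. by rewrite ltn_half_double -mul2n -expnS zlt. Qed.

Lemma av_gt1 : 1 < av.
Proof. apply: leq_trans av1; by rewrite -{1}(expn0 2) ltn_exp2l. Qed.

Lemma lip_tree (z : V) : 1 < z -> [set z; inord z./2] \notin Fset ->
  phi z <= phi (inord z./2) + wn [set z; inord z./2] /\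
  phi (inord z./2) <= phi z + wn [set z; inord z./2].
Proof.
move=> z1 nF.
have hs := half_small z.
have Cz_half : C z -> C z./2 by move=> cz; exact: (Cclos Hd av1 av2 cz z1).
have FF : ~~ C z -> C z./2 -> False.
  move=> ncz cz; move/negP: nF; apply; rewrite inE; apply/existsP; exists z.
  by rewrite z1 ncz cz eqxx.
rewrite wn2 val_half (leqNgt _ z./2) hs andbF orbF /phi val_half (leqNgt _ z./2) hs /=.
case: ifP => zl.
  case: (boolP (C z./2)) => cz2.
    case: (boolP (C z)) => cz; last by case: (FF cz cz2).
    have za : (z : nat) = av by apply: (Cleaf Hd av1 av2).
    rewrite za /av emb_val addKn psi'_val psi_a0; lia.
  have za : (z : nat) != av.
    apply/eqP => za; move: cz2; rewrite za.
    by rewrite /C (Cclos Hd av1 av2 (Ca av1) av_gt1).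
  have h1 := psi'_le (z - 2 ^ d).
  have h2 : 1 <= psi' (z - 2 ^ d).
    apply: psi'_ge1; apply: contra za => /eqP e; apply/eqP.
    by rewrite /av emb_val -e subnKC.
  lia.
case: (boolP (C z)) => cz; first by rewrite (Cz_half cz).
case: (boolP (C z./2)) => cz2; last by rewrite addn0.
by case: (FF cz cz2).
Qed.

Lemma lip (u v : V) : [set u; v] \in Eall -> [set u; v] \notin Fset ->
  [set u; v] != [set emb a0; emb b0] -> phi v <= phi u + wn [set u; v].
Proof.
move=> uvE uvF uvab; move: uvE; rewrite inE => /orP[|].
  rewrite inE => /existsP[z /andP[z1 /eqP ez]].
  rewrite ez in uvF *; have [H1 H2] := lip_tree z1 uvF.
  by case: (set2_eq ez) => [[-> ->]|[-> ->]].
move=> /imsetP[e0' e0E ez].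
have /cards2P[p [q [pq epq]]] : #|e0'| == 2 by rewrite HE0.
move: ez; rewrite epq imsetU1 imset_set1 => ez.
have npq : e0 E0 a0 b0 p q.
  rewrite /e0 -epq e0E /=; apply: contra uvab => /eqP e.
  move: e; rewrite epq => e; rewrite ez; apply/eqP.
  by case: (set2_eq e) => [[-> ->]|[-> ->]]; last rewrite finset.setUC.
rewrite ez wn2 !emb_val !leq_addr /=.
case: (set2_eq ez) => [[-> ->]|[-> ->]]; rewrite !phi_emb.
  by have := psi_lip (2*k+1) npq; lia.
by rewrite e0_sym in npq; have := psi_lip (2*k+1) npq; lia.
Qed.

Lemma Fsub : Fset \subset Eall.
Proof.
apply/fintype.subsetP => e; rewrite inE => /existsP[z /and4P[z1 _ _ /eqP ->]].
by rewrite !inE; apply/orP; left; apply/existsP; exists z; rewrite z1 eqxx.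
Qed.

Lemma Fcard : #|Fset| <= d.
Proof.
pose g (j : 'I_d) : {set V} := [set inord (sib (av %/ 2 ^ j)); inord (av %/ 2 ^ j.+1)].
apply: leq_trans (_ : #|[set g j | j : 'I_d]| <= _); last first.
  by apply: leq_trans (leq_imset_card _ _) _; rewrite card_ord.
apply: subset_leq_card; apply/fintype.subsetP => e; rewrite inE.
move=> /existsP[z /and4P[z1 ncz cz2 /eqP ->]].
have [j [e1 e2]] := Fstruct av1 (zlt z) z1 ncz cz2.
by apply/imsetP; exists j => //; rewrite /g -e2 -e1 inord_val.
Qed.

Lemma notF_leaf (u v : V) : 2 ^ d <= u -> 2 ^ d <= v -> [set u; v] \notin Fset.
Proof.
move=> hu hv; rewrite inE; apply/negP => /existsP[z /and4P[_ _ _ /eqP ez]].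
have hs := half_small z.
case: (set2_eq ez) => [[_ e]|[e _]];
  [move: hv | move: hu]; rewrite e val_half leqNgt hs.
all: by [].
Qed.

Lemma ab_E : [set emb a0; emb b0] \in Eall.
Proof.
rewrite inE; apply/orP; right; apply/imsetP; exists [set a0; b0] => //.
by rewrite imsetU1 imset_set1.
Qed.

Lemma Cn_val (x : V) : C x = Cn d av x.
Proof. by []. Qed.

Lemma walk_ab : exists p, path (fun u v => [set u; v] \in Eall :\: Fset) (inord 1) p /\
  last (inord 1) p = emb b0 /\ wl (inord 1) p = k + 1.
Proof.
have Q : forall j, j <= d -> exists p,
    path (fun u v => [set u; v] \in Eall :\: Fset) (inord (av %/ 2 ^ j)) p /\
    last (inord (av %/ 2 ^ j)) p = emb b0 /\
    wl (inord (av %/ 2 ^ j)) p = (if j == 0 then 1 else k + 1).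
  elim=> [|j IH] jd.
    exists [:: emb b0]; rewrite expn0 divn1 /av inord_val /= andbT.
    rewrite in_setD notF_leaf ?emb_val ?leq_addr // ab_E; split => //; split => //.
    by rewrite /wl /= big_cons big_nil wn2 !emb_val !leq_addr.
  have jd' : j < d by [].
  have [p [pp [lp wp]]] := IH (ltnW jd).
  set z : V := inord (av %/ 2 ^ j).
  have zv : (z : nat) = av %/ 2 ^ j.
    rewrite inordK // Hm; apply: leq_ltn_trans av2; exact: leq_div.
  have z1 : 1 < z.
    rewrite zv; apply: leq_trans (adiv_lo av1 (ltnW jd')).
    by rewrite -{1}(expn1 2) leq_exp2l // subn_gt0.
  have hz : (z : nat)./2 = av %/ 2 ^ j.+1 by rewrite zv (adivS av).
  have ez : [set (inord (av %/ 2 ^ j.+1) : V); z] = [set z; inord z./2].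
    by rewrite finset.setUC hz.
  exists (z :: p); rewrite /= pp lp; split; last split => //.
    rewrite andbT ez in_setD; apply/andP; split; last first.
      by rewrite in_setU; apply/orP; left; rewrite inE; apply/existsP; exists z; rewrite z1 eqxx.
    apply/negP; rewrite inE => /existsP[z' /and4P[_ ncz _ /eqP ez']].
    case: (set2_eq ez') => [[e _]|[_ e]]; move: ncz; rewrite -e.
      by rewrite Cn_val zv (Cpath av1 (ltnW jd')).
    by rewrite Cn_val val_half hz (Cpath av1 jd).
  rewrite /wl /= big_cons -/(wl z p) wp wn2 zv.
  have hs : av %/ 2 ^ j.+1 < 2 ^ d by rewrite -hz half_small.
have hv : ((inord (av %/ 2 ^ j.+1) : V) : nat) = av %/ 2 ^ j.+1 by rewrite -hz val_half.
  rewrite hv;   rewrite (leqNgt _ (av %/ 2 ^ j.+1)) hs /=.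
  case: j {IH jd wp hs hz ez zv z1 z p pp lp hv} jd' => [|j] jd' /=.
    by rewrite expn0 divn1 av1; lia.
  rewrite ifF; first by lia.
  apply/negbTE; rewrite -ltnNge; apply: leq_trans (adiv_hi av2 (ltnW jd')) _.
  by rewrite leq_exp2l //; lia.
have [p [pp [lp wp]]] := Q d (leqnn d).
rewrite (adiv_d Hd av1 av2) in pp lp wp.
exists p; split => //; split => //; rewrite wp; move: Hd; by rewrite lt0n => /negbTE ->.
Qed.

Lemma val1 : ((inord 1 : V) : nat) = 1.
Proof. by rewrite inordK // Hm -{1}(expn0 2) ltn_exp2l. Qed.

Lemma phi_root : phi (inord 1) = 0.
Proof.
rewrite /phi val1 ifF; last by apply/negbTE; rewrite -ltnNge -{1}(expn0 2) ltn_exp2l.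
by rewrite ifT //; exact: (C1 Hd av1 av2).
Qed.

Lemma phi_b : phi (emb b0) = 3 * k + 1.
Proof.
rewrite phi_emb psi_b0 //; first lia.
by have -> : (2 * k + 1).+1 = 2 * k + 2 by lia.
Qed.

Local Open Scope ring_scope.
Lemma key (R : realType) (f : nat) (sigma : R) (H : {set {set V}}) :
  (d <= f)%N -> 1 <= sigma -> sigma < (3 * k + 1)%:R / (k + 1)%:R ->
  is_EFT_ASPT Eall (fun e => (wn e)%:R) (inord 1) f sigma H ->
  [set emb a0; emb b0] \in H.
Proof.
move=> df s1 slt [Hsub HF]; apply/negPn/negP => nH.
have := HF Fset Fsub (leq_trans Fcard df) (emb b0).
have dE : (dist (Eall :\: Fset) (fun e => (wn e)%:R : R) (inord 1) (emb b0) <= ((k + 1)%:R)%:E)%E.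
  have [p [pp [lp wp]]] := walk_ab.
  apply: ereal_inf_lbound; exists p; first by apply/andP; split; [exact: pp | rewrite lp].
  by rewrite walk_lenE wp.
have dH : (((3 * k + 1)%:R)%:E <= dist (H :\: Fset) (fun e => (wn e)%:R : R) (inord 1) (emb b0))%E.
  apply/ereal_infP => _ [p /andP[pp /eqP lp] <-].
  rewrite lee_fin walk_lenE ler_nat.
  have := potential (phi0 := phi) (X := H :\: Fset) _ pp; rewrite lp phi_b phi_root add0n; apply.
  move=> u v; rewrite in_setD => /andP[uvF uvH].
  apply: lip => //; first by move/fintype.subsetP: Hsub; apply.
  by apply: contraNneq nH => <-.
move=> h.
have h2 := le_trans dH (le_trans h (lee_wpmul2l _ dE)).
have s0 : 0 <= sigma by apply: le_trans s1.
move: h2; rewrite lee_fin s0 => /(_ isT); rewrite -EFinM lee_fin => h3.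
move: slt; rewrite ltr_pdivlMr ?ltr0n ?addn1 // => h4.
rewrite !addn1 in h3; by move: (le_lt_trans h3 h4); rewrite ltxx.
Qed.
End Fault.
End Graph.

Unset Implicit Arguments.
Local Open Scope ring_scope.

Lemma log2_pow (R : realType) (n : nat) : log2 ((2 ^ n)%N%:R : R) = n%:R.
Proof.
rewrite /log2 natrX lnXn ?ltr0n // -[ln _ *+ n]mulr_natl mulfK //.
by apply/lt0r_neq0/ln_gt0; rewrite ltr1n.
Qed.

Lemma pow_bound (R : realType) (x y : nat) (p : R) : (x <= 4 * y)%N -> 0 <= p -> p <= 2 ->
  powR (x%:R : R) p <= 16 * powR (y%:R) p.
Proof.
move=> xy p0 p2.
apply: (@le_trans _ _ (powR ((4 * y)%N%:R) p)).
  by apply: ge0_ler_powR => //; rewrite ?nnegrE ?ler0n // ler_nat.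
rewrite natrM powRM ?ler0n // ler_wpM2r ?powR_ge0 //.
apply: le_trans (ler_powR _ p2) _; first by rewrite ler1n.
by rewrite powR_mulrn ?ler0n // -natrX.
Qed.

Theorem mainTheorem8 (R : realType) :
  (forall k : nat, (1 <= k)%N -> erdos_girth_conjecture R k) ->
  forall k : nat, (1 <= k)%N ->
  exists c : R, 0 < c /\
    forall N : nat, exists n : nat, (N <= n)%N /\
      exists (E : {set {set 'I_n}}) (w : {set 'I_n} -> R) (s : 'I_n),
        [/\ simple_graph E, (forall e, e \in E -> 0 <= w e) &
          forall (f : nat) (sigma : R) (H : {set {set 'I_n}}),
            log2 (n%:R : R) <= f%:R ->
            1 <= sigma ->
            sigma < (3 * k + 1)%:R / (k + 1)%:R ->
            is_EFT_ASPT E w s f sigma H ->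
            c * powR (n%:R) (1 + k%:R^-1) <= #|H|%:R].
Proof.
move=> Hc k k1; have [c0 [c0pos Hc0]] := Hc k k1.
exists (c0 / 16); split; first by rewrite divr_gt0.
move=> N; have [eta [Neta [E0 [HE0 Hg Hcard]]]] := Hc0 (maxn N 2).
have eta2 : (1 < eta)%N by apply: leq_trans Neta; rewrite leq_maxr.
set d := up_log 2 eta.
have /andP[lo hi] := up_log_bounds (isT : (1 < 2)%N) eta2.
have d0 : (0 < d)%N by rewrite up_log_gt0 eta2.
set m := (2 ^ d.+1).-1.
have Hm : m.+1 = (2 ^ d.+1)%N by rewrite prednK // expn_gt0.
exists m.+1; split.
  rewrite Hm; apply: leq_trans (leq_trans (leq_trans (leq_maxl N 2) Neta) hi) _.
  by rewrite leq_exp2l.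
exists (Eall d m E0), (fun e => (wn k d e)%:R), (inord 1); split.
- exact: Eall_simple d0 Hm hi HE0.
- by move=> e _; rewrite ler0n.
move=> f sigma H hf s1 slt HE.
have df : (d <= f)%N.
  by move: hf; rewrite Hm log2_pow ler_nat; apply: leq_trans.
have sub : EG d m E0 \subset H.
  apply/fintype.subsetP => e /imsetP[e0 e0E ->].
  have /cards2P[a0 [b0 [ab e0ab]]] : #|e0| == 2%N by rewrite HE0.
  rewrite e0ab imsetU1 imset_set1.
  apply: (key d0 Hm hi HE0 ab _ Hg df s1 slt HE); first by rewrite -e0ab.
have cardH : (#|E0| <= #|H|)%N.
  apply: leq_trans (subset_leq_card sub); rewrite /EG card_imset //.
  exact: imset_inj (emb_inj Hm hi).
have p0 : 0 <= 1 + k%:R^-1 :> R by rewrite addr_ge0 // invr_ge0 ler0n.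
have p2 : 1 + k%:R^-1 <= 2 :> R.
  by rewrite -[2]/(1 + 1) lerD2l invf_le1 ?ler1n ?ltr0n.
have m4 : (m.+1 <= 4 * eta)%N.
  rewrite Hm -(prednK d0) !expnS; move: lo; rewrite -/d; lia.
have hb := @pow_bound R _ _ _ m4 p0 p2.
apply: le_trans (_ : c0 * powR (eta%:R) (1 + k%:R^-1) <= _); last first.
  by apply: le_trans Hcard _; rewrite ler_nat.
apply: le_trans (ler_wpM2l _ hb) _; first by rewrite divr_ge0 // ltW.
by rewrite mulrA divfK.
Qed.
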